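(* Let $A$ be a finite alphabet, $E\subseteq W(A)$ and $\vec s\in V^\infty(A)$ such that $E$ is large in $\vec s$. Then there exists a sequence $\vec w=(w_n(x))_{n=0}^\infty\in V^\infty(A)$ with $\vec w\le\vec s$ such that, setting $F_n=\langle (w_i(x))_{i=0}^n\rangle_c$, the set $E\cap E_{F_n}$ is large in $(w_{n+1+i}(x))_{i=0}^\infty$ for every $n\in\mathbb N$.
   Context: $\mathbb N=\{0,1,2,\dots\}$. Let $A$ be a finite nonempty alphabet. $W(A)$ denotes the set of all finite words over $A$, including the empty word; words are concatenated by juxtaposition. Fix a symbol $x\notin A$. A variable word over $A$ is a finite word over $A\cup\{x\}$ in which $x$ occurs at least once; $V(A)$ is the set of variable words. For $s(x)\in V(A)$ and $a\in A\cup\{x\}$, $s(a)$ is obtained by replacing every occurrence of $x$ by $a$. $V^\infty(A)$ is the set of infinite sequences of variable words. For a sequence $(s_n(x))_{n\in I}$ of variable words indexed by a set $I\subseteq\mathbb N$ that is either a finite interval or of the form $\{m,m+1,\dots\}$: the constant span $\langle (s_n(x))_{n\in I}\rangle_c$ is the set of all words $s_{l_0}(a_0)s_{l_1}(a_1)\cdots s_{l_j}(a_j)$ with $j\ge 0$, $l_0<\dots<l_j$ in $I$ and $a_0,\dots,a_j\in A$; the variable span $\langle (s_n(x))_{n\in I}\rangle_v$ is the set of all words $s_{l_0}(a_0)\cdots s_{l_j}(a_j)$ with $j\ge0$, $l_0<\dots<l_j$ in $I$, $a_0,\dots,a_j\in A\cup\{x\}$ and at least one $a_i=x$. Extracted subsequences: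 let $\vec s=(s_n(x))_{n=0}^\infty\in V^\infty(A)$. A finite sequence $(t_n(x))_{n=0}^l$ of variable words is an extracted subsequence of $\vec s$ if there exist integers $0=m_0<m_1<\dots<m_{l+1}$ with $t_i(x)\in\langle (s_n(x))_{n=m_i}^{m_{i+1}-1}\rangle_v$ for all $0\le i\le l$. An infinite sequence $\vec t=(t_n(x))_{n=0}^\infty$ is an extracted subsequence of $\vec s$ if every initial segment $(t_n(x))_{n=0}^l$ is a finite extracted subsequence of $\vec s$. We write $\vec t\le\vec s$. A set $E\subseteq W(A)$ is large in $\vec s\in V^\infty(A)$ if $E\cap\langle\vec w\rangle_c\neq\emptyset$ for every infinite extracted subsequence $\vec w$ of $\vec s$. For $E\subseteq W(A)$ and nonempty $F\subseteq W(A)$, $E_F=\{z\in W(A): wz\in E\text{ for every }w\in F\}$. *)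

(* Defs.v *)
From mathcomp Require Import all_boot.
Set Implicit Arguments. Unset Strict Implicit. Unset Printing Implicit Defensive.

(* Alphabet A : finType.  The letter set A ∪ {x} is [option A], with
   [None] playing the role of the variable symbol x. *)

Definition word (A : Type) := seq A.
Definition xword (A : Type) := seq (option A).

Definition is_var_word (A : eqType) (s : xword A) : bool := None \in s.

Definition subst_x (A : Type) (s : xword A) (a : option A) : xword A :=
  map (fun c => if c is Some b then Some b else a) s.

Definition subst_c (A : Type) (s : xword A) (a : A) : word A :=
  map (fun c => if c is Some b then b else a) s.

Definition vseq (A : eqType) (s : nat -> xword A) : Prop :=
  forall n, is_var_word (s n).

(* Index sets: finite interval [m, m'] (Some m') or the ray {m, m+1, ...} (None). *)
Definition in_index (m : nat) (m' : option nat) (l : nat) : bool :=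
  (m <= l) && (if m' is Some k then l <= k else true).

(* Constant span of (s_n)_{n ∈ I}: words s_{l_0}(a_0)...s_{l_j}(a_j),
   j >= 0, l_0 < ... < l_j in I, a_i ∈ A.  The choice data is a nonempty
   list of pairs (l_i, a_i). *)
Definition in_cspan (A : eqType) (s : nat -> xword A) (m : nat) (m' : option nat)
  (w : word A) : Prop :=
  exists ls : seq (nat * A),
    [/\ ls != [::],
        sorted ltn (map fst ls),
        all (in_index m m') (map fst ls) &
        w = flatten (map (fun p => subst_c (s p.1) p.2) ls)].

Definition in_vspan (A : eqType) (s : nat -> xword A) (m : nat) (m' : option nat)
  (w : xword A) : Prop :=
  exists ls : seq (nat * option A),
    [/\ ls != [::],
        sorted ltn (map fst ls),
        all (in_index m m') (map fst ls),
        None \in map snd ls &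
        w = flatten (map (fun p => subst_x (s p.1) p.2) ls)].

Definition fin_extracted (A : eqType) (t s : nat -> xword A) (l : nat) : Prop :=
  exists mm : nat -> nat,
    [/\ mm 0 = 0,
        (forall i, i <= l -> mm i < mm i.+1) &
        (forall i, i <= l -> in_vspan s (mm i) (Some (mm i.+1).-1) (t i))].

Definition extracted (A : eqType) (t s : nat -> xword A) : Prop :=
  forall l, fin_extracted t s l.

Definition large (A : eqType) (E : word A -> Prop) (s : nat -> xword A) : Prop :=
  forall w : nat -> xword A, vseq w -> extracted w s ->
    exists z, E z /\ in_cspan w 0 None z.

Definition shiftset (A : Type) (E F : word A -> Prop) : word A -> Prop :=
  fun z => forall w, F w -> E (w ++ z).

(* Main.v *)
Require Import Defs.
From mathcomp Require Import all_boot.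
From Stdlib Require Import ClassicalEpsilon FunctionalExtensionality Classical.
Set Implicit Arguments. Unset Strict Implicit. Unset Printing Implicit Defensive.


Section Reps.
Variable A : finType.
Implicit Types (s u t : nat -> xword A).

Definition xval s (ls : seq (nat * option A)) : xword A :=
  flatten (map (fun p => subst_x (s p.1) p.2) ls).
Definition cval s (ls : seq (nat * A)) : word A :=
  flatten (map (fun p => subst_c (s p.1) p.2) ls).

Definition osub (b a : option A) : option A := if b is Some c then Some c else a.
Definition csub (b : option A) (a : A) : A := if b is Some c then c else a.

Lemma subst_x_cat (w1 w2 : xword A) o : subst_x (w1 ++ w2) o = subst_x w1 o ++ subst_x w2 o.
Proof. by rewrite /subst_x map_cat. Qed.
Lemma subst_c_cat (w1 w2 : xword A) a : subst_c (w1 ++ w2) a = subst_c w1 a ++ subst_c w2 a.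
Proof. by rewrite /subst_c map_cat. Qed.
Lemma subst_xx (w : xword A) b a : subst_x (subst_x w b) a = subst_x w (osub b a).
Proof. rewrite /subst_x -map_comp; apply: eq_map => [[c|]] //=; by case: b. Qed.
Lemma subst_cx (w : xword A) b a : subst_c (subst_x w b) a = subst_c w (csub b a).
Proof. rewrite /subst_c /subst_x -map_comp; apply: eq_map => [[c|]] //=; by case: b. Qed.
Lemma subst_x_None (w : xword A) : subst_x w None = w.
Proof. rewrite /subst_x -[RHS]map_id; apply: eq_map => [[c|]] //. Qed.
Lemma xval_cat s l1 l2 : xval s (l1 ++ l2) = xval s l1 ++ xval s l2.
Proof. by rewrite /xval map_cat flatten_cat. Qed.
Lemma cval_cat s l1 l2 : cval s (l1 ++ l2) = cval s l1 ++ cval s l2.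
Proof. by rewrite /cval map_cat flatten_cat. Qed.
Lemma xval_cons s p l : xval s (p :: l) = subst_x (s p.1) p.2 ++ xval s l.
Proof. by []. Qed.
Lemma cval_cons s p l : cval s (p :: l) = subst_c (s p.1) p.2 ++ cval s l.
Proof. by []. Qed.

Lemma subst_x_xval s R o :
  subst_x (xval s R) o = xval s [seq (q.1, osub q.2 o) | q <- R].
Proof.
elim: R => [|q R IH] //=; by rewrite xval_cons subst_x_cat subst_xx IH.
Qed.
Lemma subst_c_xval s R a :
  subst_c (xval s R) a = cval s [seq (q.1, csub q.2 a) | q <- R].
Proof.
elim: R => [|q R IH] //=; by rewrite xval_cons subst_c_cat subst_cx IH.
Qed.

Definition comp (ls : seq (nat * option A)) (R : nat -> seq (nat * option A)) :=
  flatten [seq [seq (q.1, osub q.2 p.2) | q <- R p.1] | p <- ls].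
Definition ccomp (ls : seq (nat * A)) (R : nat -> seq (nat * option A)) :=
  flatten [seq [seq (q.1, csub q.2 p.2) | q <- R p.1] | p <- ls].

Lemma xval_comp u s ls R : (forall p, p \in ls -> u p.1 = xval s (R p.1)) ->
  xval u ls = xval s (comp ls R).
Proof.
elim: ls => [|p ls IH] H //=.
rewrite /comp /= xval_cat -/(comp ls R) -IH; last by move=> q hq; apply: H; rewrite inE hq orbT.
by rewrite xval_cons H ?inE ?eqxx // subst_x_xval.
Qed.
Lemma cval_comp u s ls R : (forall p, p \in ls -> u p.1 = xval s (R p.1)) ->
  cval u ls = cval s (ccomp ls R).
Proof.
elim: ls => [|p ls IH] H //=.
rewrite /ccomp /= cval_cat -/(ccomp ls R) -IH; last by move=> q hq; apply: H; rewrite inE hq orbT.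
by rewrite cval_cons H ?inE ?eqxx // subst_c_xval.
Qed.

Lemma comp_idx ls R : map fst (comp ls R) = flatten [seq map fst (R j) | j <- map fst ls].
Proof.
elim: ls => [|p ls IH] //=; rewrite /comp /= map_cat -/(comp ls R) IH -map_comp.
by congr (_ ++ _); apply: eq_map.
Qed.
Lemma ccomp_idx ls R : map fst (ccomp ls R) = flatten [seq map fst (R j) | j <- map fst ls].
Proof.
elim: ls => [|p ls IH] //=; rewrite /ccomp /= map_cat -/(ccomp ls R) IH -map_comp.
by congr (_ ++ _); apply: eq_map.
Qed.

End Reps.

Lemma pairwise_blocks (I : seq nat) (Rf : nat -> seq nat) (lo hi : nat -> nat) :
  pairwise ltn I ->
  (forall j, j \in I -> pairwise ltn (Rf j) /\ all (fun i => lo j <= i < hi j) (Rf j)) ->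
  (forall j j', j \in I -> j' \in I -> j < j' -> hi j <= lo j') ->
  pairwise ltn (flatten [seq Rf j | j <- I]).
Proof.
elim: I => [|j I IH] //= /andP[hj hI] HR Hb.
rewrite pairwise_cat; apply/and3P; split; last first.
- apply: IH => // [k hk|k k' hk hk' hkk']; first by apply: HR; rewrite inE hk orbT.
  by apply: Hb; rewrite ?inE ?hk ?hk' ?orbT.
- by case: (HR j (mem_head _ _)).
apply/allrelP => i i' hi1 /flattenP [x /mapP [k hk ->] hi2].
have [_ /allP /(_ i hi1) /andP [_ h1]] := HR j (mem_head _ _).
have [_ /allP /(_ i' hi2) /andP [h2 _]] := HR k ltac:(by rewrite inE hk orbT).
have hjk : j < k by move/allP: hj => /(_ k hk).
have := Hb j k (mem_head _ _) ltac:(by rewrite inE hk orbT) hjk.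
move=> h3; apply: (leq_trans h1); exact: leq_trans h3 h2.
Qed.


Lemma fchoice (T : Type) (d : T) (Q : nat -> Prop) (P : nat -> T -> Prop) :
  (forall j, Q j -> exists x, P j x) -> exists f : nat -> T, forall j, Q j -> P j (f j).
Proof.
move=> H.
exists (fun j => match excluded_middle_informative (exists x, P j x) with
                 | left h => proj1_sig (constructive_indefinite_description _ h)
                 | right _ => d end).
move=> j /H hj; case: excluded_middle_informative => [h|//].
exact: proj2_sig (constructive_indefinite_description _ h).
Qed.

Lemma mono_mm (mm : nat -> nat) a b : (forall i, a <= i <= b -> mm i < mm i.+1) ->
  forall i j, a <= i -> i < j -> j <= b.+1 -> mm i < mm j.
Proof.
move=> H i j hai hij hjb; elim: j hij hjb => [//|j IH] hij hjb.
rewrite ltnS leq_eqVlt in hij; case/orP: hij => [/eqP eij|hij].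
  by subst i; apply: H; rewrite hai.
apply: ltn_trans (IH hij (ltnW hjb)) (H j _).
by rewrite (leq_trans hai (ltnW hij)).
Qed.

Lemma mono_mm_le (mm : nat -> nat) a b : (forall i, a <= i <= b -> mm i < mm i.+1) ->
  forall i j, a <= i -> i <= j -> j <= b.+1 -> mm i <= mm j.
Proof.
move=> H i j hai hij hjb; rewrite leq_eqVlt in hij; case/orP: hij => [/eqP ->//|hij].
by apply: ltnW; apply: (mono_mm H).
Qed.

Section Ext.
Variable A : finType.
Implicit Types (s u t : nat -> xword A).

Lemma in_vspanE s m k w : in_vspan s m (Some k) w <->
  exists ls, [/\ ls != [::], pairwise ltn (map fst ls),
     all (fun i => m <= i <= k) (map fst ls), None \in map snd ls & w = xval s ls].
Proof.
split=> [[ls [h1 h2 h3 h4 h5]]|[ls [h1 h2 h3 h4 h5]]]; exists ls; split=> //.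
- by rewrite -sorted_pairwise //; apply: ltn_trans.
- by rewrite sorted_pairwise //; apply: ltn_trans.
Qed.

Lemma in_cspanE s z : in_cspan s 0 None z <->
  exists ls, [/\ ls != [::], pairwise ltn (map fst ls) & z = cval s ls].
Proof.
split=> [[ls [h1 h2 h3 h4]]|[ls [h1 h2 h3]]]; exists ls; split=> //.
- by rewrite -sorted_pairwise //; apply: ltn_trans.
- by rewrite sorted_pairwise //; apply: ltn_trans.
- by apply/allP.
Qed.

Lemma blocks_gen (I : seq nat) (Rf : nat -> seq nat) (lo hi : nat -> nat) :
  pairwise ltn I ->
  (forall j, j \in I -> pairwise ltn (Rf j) /\ all (fun i => lo j <= i < hi j) (Rf j)) ->
  (forall j j', j \in I -> j' \in I -> j < j' -> hi j <= lo j') ->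
  pairwise ltn (flatten [seq Rf j | j <- I]) /\
  forall i, i \in flatten [seq Rf j | j <- I] -> exists2 j, j \in I & lo j <= i < hi j.
Proof.
move=> h1 h2 h3; split; first exact: pairwise_blocks h1 h2 h3.
move=> i /flattenP [x /mapP [j hj ->] hix]; exists j => //.
by have [_ /allP /(_ i hix)] := h2 j hj.
Qed.

Lemma vspan_comp u s a b (mm : nat -> nat) w :
  (forall j, a <= j <= b -> mm j < mm j.+1) ->
  (forall j, a <= j <= b -> in_vspan s (mm j) (Some (mm j.+1).-1) (u j)) ->
  in_vspan u a (Some b) w -> in_vspan s (mm a) (Some (mm b.+1).-1) w.
Proof.
move=> Hmm Hu /in_vspanE [ls [l1 l2 l3 l4 l5]].
have [R HR] := @fchoice _ [::] (fun j => a <= j <= b) (fun j R =>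
   [/\ R != [::], pairwise ltn (map fst R),
     all (fun i => mm j <= i <= (mm j.+1).-1) (map fst R), None \in map snd R &
     u j = xval s R]) (fun j hj => proj1 (in_vspanE _ _ _ _) (Hu j hj)).
have inI : forall j, j \in map fst ls -> a <= j <= b by move=> j hj; move/allP: l3 => /(_ j hj).
have S1 : forall j, j \in map fst ls -> pairwise ltn (map fst (R j)) /\ all (fun i => mm j <= i < mm j.+1) (map fst (R j)).
  move=> j hj; case: (HR _ (inI j hj)) => _ h2 h3 _ _; split=> //.
  apply/allP => i hi; move/allP: h3 => /(_ i hi) /andP [-> h4] /=.
  have /andP [ha hb] := inI j hj.
  have := Hmm j (inI j hj); case: (mm j.+1) h4 => [//|m] /=; by rewrite ltnS.
have S2 : forall j j', j \in map fst ls -> j' \in map fst ls -> j < j' -> mm j.+1 <= mm j'.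
  move=> j j' hj hj' hjj'; have /andP [ha _] := inI j hj; have /andP [_ hb] := inI j' hj'.
  exact: (mono_mm_le Hmm (leq_trans ha (leqnSn _)) hjj' (leqW hb)).
have [P1 P2] := @blocks_gen (map fst ls) (fun j => map fst (R j)) mm (fun j => mm j.+1) l2 S1 S2.
apply/in_vspanE; exists (comp ls R); split.
  + case: ls l1 l4 l5 inI {l2 l3 S1 S2 P1 P2} => [//|p ls] _ _ _ inI.
    have hp := inI p.1 (mem_head _ _); case: (HR _ hp) => hR _ _ _ _.
    by rewrite /comp /=; case: (R p.1) hR.
  + by rewrite comp_idx.
  + apply/allP => i; rewrite comp_idx => /P2 [j hj /andP [h1 h2]].
    have /andP [ha hb] := inI j hj.
    apply/andP; split.
      apply: leq_trans h1; exact: (mono_mm_le Hmm (leqnn a) ha (leqW hb)).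
    have : mm j.+1 <= mm b.+1 by exact: (mono_mm_le Hmm (i:=j.+1) (j:=b.+1) (leq_trans ha (leqnSn _)) hb (leqnn _)).
    move=> h3; move: (leq_trans h2 h3); by case: (mm b.+1).
  + move/mapP: l4 => [p hp hp2].
    have hpj := inI p.1 (map_f _ hp); case: (HR _ hpj) => _ _ _ /mapP [q hq hq2] _.
    apply/mapP; exists (q.1, osub q.2 p.2) => //=; last by rewrite -hp2 -hq2.
    apply/flattenP; exists [seq (q0.1, osub q0.2 p.2) | q0 <- R p.1]; last by apply: map_f.
    by apply/mapP; exists p.
  + by rewrite l5; apply: xval_comp => p hp; case: (HR _ (inI _ (map_f _ hp))).
Qed.
End Ext.


Section Ext2.
Variable A : finType.
Implicit Types (s u t : nat -> xword A).

Lemma cspan_comp u s l (mm : nat -> nat) ls :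
  (forall j, j <= l -> mm j < mm j.+1) ->
  (forall j, j <= l -> in_vspan s (mm j) (Some (mm j.+1).-1) (u j)) ->
  ls != [::] -> pairwise ltn (map fst ls) -> all (fun i => i <= l) (map fst ls) ->
  exists ls', [/\ ls' != [::], pairwise ltn (map fst ls') &
    cval u ls = cval s ls'].
Proof.
move=> Hmm Hu l1 l2 l3.
have [R HR] := @fchoice _ [::] (fun j => j <= l) (fun j R =>
   [/\ R != [::], pairwise ltn (map fst R),
     all (fun i => mm j <= i <= (mm j.+1).-1) (map fst R), None \in map snd R &
     u j = xval s R]) (fun j hj => proj1 (in_vspanE _ _ _ _) (Hu j hj)).
have inI : forall j, j \in map fst ls -> j <= l by move=> j hj; move/allP: l3 => /(_ j hj).
have Hmm' : forall j, 0 <= j <= l -> mm j < mm j.+1 by move=> j /andP [_]; apply: Hmm.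
have S1 : forall j, j \in map fst ls -> pairwise ltn (map fst (R j)) /\ all (fun i => mm j <= i < mm j.+1) (map fst (R j)).
  move=> j hj; case: (HR _ (inI j hj)) => _ h2 h3 _ _; split=> //.
  apply/allP => i hi; move/allP: h3 => /(_ i hi) /andP [-> h4] /=.
  have := Hmm j (inI j hj); case: (mm j.+1) h4 => [//|m] /=; by rewrite ltnS.
have S2 : forall j j', j \in map fst ls -> j' \in map fst ls -> j < j' -> mm j.+1 <= mm j'.
  move=> j j' hj hj' hjj'.
  exact: (mono_mm_le Hmm' (i:=j.+1) (j:=j') (leq0n _) hjj' (leqW (inI _ hj'))).
have [P1 P2] := @blocks_gen (map fst ls) (fun j => map fst (R j)) mm (fun j => mm j.+1) l2 S1 S2.
exists (ccomp ls R); split.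
- case: ls l1 l3 inI {l2 S1 S2 P1 P2} => [//|p ls] _ _ inI.
  have hp := inI p.1 (mem_head _ _); case: (HR _ hp) => hR _ _ _ _.
  by rewrite /ccomp /=; case: (R p.1) hR.
- by rewrite ccomp_idx.
- by apply: cval_comp => p hp; case: (HR _ (inI _ (map_f _ hp))).
Qed.

Lemma max_idx (ls : seq nat) : all (fun i => i <= foldr maxn 0 ls) ls.
Proof.
elim: ls => [|x ls IH] //=; rewrite leq_maxl /=.
apply/allP => i hi; move/allP: IH => /(_ i hi) h; apply: leq_trans h _; exact: leq_maxr.
Qed.

Lemma cspan_ext t s z : extracted t s -> in_cspan t 0 None z -> in_cspan s 0 None z.
Proof.
move=> Hts /in_cspanE [ls [l1 l2 ->]].
have [mm [h0 h1 h2]] := Hts (foldr maxn 0 (map fst ls)).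
have [ls' [k1 k2 k3]] := cspan_comp h1 h2 l1 l2 (max_idx _).
by apply/in_cspanE; exists ls'.
Qed.

Lemma ext_trans t u s : extracted t u -> extracted u s -> extracted t s.
Proof.
move=> Htu Hus l.
have [mm1 [h0 h1 h2]] := Htu l.
have [mm2 [g0 g1 g2]] := Hus (mm1 l.+1).
have g1' : forall j, 0 <= j <= mm1 l.+1 -> mm2 j < mm2 j.+1 by move=> j /andP [_]; apply: g1.
have h1' : forall j, 0 <= j <= l -> mm1 j < mm1 j.+1 by move=> j /andP [_]; apply: h1.
have le1 : forall i, i <= l -> mm1 i.+1 <= mm1 l.+1.
  by move=> i hi; apply: (mono_mm_le h1' (i:=i.+1) (j:=l.+1) (leq0n _) hi (leqnn _)).
exists (fun i => mm2 (mm1 i)); split.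
- by rewrite h0 g0.
- move=> i hi; apply: (mono_mm g1' (leq0n _) (h1 i hi)); exact: leqW (le1 i hi).
- move=> i hi.
  have pos : 0 < mm1 i.+1 by apply: leq_ltn_trans (h1 i hi).
  have := @vspan_comp A u s (mm1 i) (mm1 i.+1).-1 mm2 (t i).
  rewrite prednK //; apply.
  + move=> j /andP [_ hj]; apply: g1; apply: leq_trans hj _.
    by apply: leq_trans (leq_pred _) (le1 i hi).
  + move=> j /andP [_ hj]; apply: g2; apply: leq_trans hj _.
    by apply: leq_trans (leq_pred _) (le1 i hi).
  + exact: h2.
Qed.

Lemma large_ext (G : word A -> Prop) t s : large G s -> extracted t s -> large G t.
Proof. move=> HG Hts w hw Hwt; apply: HG => //; exact: ext_trans Hwt Hts. Qed.

Lemma large_mono (G G' : word A -> Prop) s : (forall z, G z -> G' z) -> large G s -> large G' s.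
Proof. move=> HGG HG w hw Hws; have [z [hz1 hz2]] := HG w hw Hws; exists z; split=> //; exact: HGG. Qed.

Lemma vspan_single s i : in_vspan s i (Some i) (s i).
Proof.
apply/in_vspanE; exists [:: (i, None)]; split=> //=; first by rewrite leqnn.
by rewrite /xval /= subst_x_None cats0.
Qed.

Lemma cspan_single s i a : in_cspan s 0 None (subst_c (s i) a).
Proof. apply/in_cspanE; exists [:: (i, a)]; split=> //=; by rewrite /cval /= cats0. Qed.

Lemma ext_refl s : extracted s s.
Proof. move=> l; exists id; split=> // i _; exact: vspan_single. Qed.

Lemma vspan_shift s K m k w : in_vspan (fun i => s (K + i)) m (Some k) w ->
  in_vspan s (K + m) (Some (K + k)) w.
Proof.
move/in_vspanE => [ls [l1 l2 l3 l4 l5]]; apply/in_vspanE.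
exists [seq (K + p.1, p.2) | p <- ls]; split.
- by case: ls {l2 l3 l4 l5} l1.
- rewrite -map_comp (map_comp (addn K) fst) pairwise_map.
  by apply: sub_pairwise l2 => x y /=; rewrite ltn_add2l.
- rewrite -map_comp (map_comp (addn K) fst) all_map; apply: sub_all l3 => x /=.
  by rewrite !leq_add2l.
- by rewrite -map_comp.
- by rewrite l5 /xval -map_comp.
Qed.

Lemma glue t s j K (mm : nat -> nat) :
  mm 0 = 0 -> (forall i, i < j -> mm i < mm i.+1) -> mm j = K ->
  (forall i, i < j -> in_vspan s (mm i) (Some (mm i.+1).-1) (t i)) ->
  extracted (fun i => t (j + i)) (fun i => s (K + i)) -> extracted t s.
Proof.
move=> h0 h1 hK h2 Hext l.
case: (ltnP l j) => hlj.
  exists mm; split=> // i hi; [apply: h1|apply: h2]; exact: leq_ltn_trans hi hlj.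
have [mm' [g0 g1 g2]] := Hext (l - j).
exists (fun i => if i <= j then mm i else K + mm' (i - j)); split.
- by rewrite leq0n.
- move=> i hi; case: (ltnP i j) => hij.
  + rewrite (ltnW hij); exact: h1.
  + case: (leqP i j) => hij2.
    * have eij : i = j by apply/eqP; rewrite eqn_leq hij hij2.
      subst i; rewrite hK subSn // subnn -[X in X < _]addn0 -{1}g0 ltn_add2l; apply: g1.
      by [].
    * rewrite ltn_add2l subSn //; apply: g1; by rewrite leq_sub2r.
- move=> i hi; case: (ltnP i j) => hij.
  + rewrite (ltnW hij); exact: h2.
  + have hle : i - j <= l - j := leq_sub2r _ hi.
    have hpos : 0 < mm' (i - j).+1 by apply: leq_ltn_trans (g1 _ hle).
    have Hw := g2 (i - j) hle.
    rewrite /= subnKC // in Hw.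
    have := vspan_shift Hw; rewrite subSn // -!subn1 addnBA //.
    case: (leqP i j) => hij2 //.
    have eij : i = j by apply/eqP; rewrite eqn_leq hij hij2.
    by subst i; rewrite hK subnn g0 addn0.
Qed.

Lemma ext_tail s K : extracted (fun i => s (K + i)) s.
Proof.
apply: (@glue _ s 1 K.+1 (fun i => if i is 0 then 0 else K.+1)) => //.
- by move=> i; rewrite ltnS leqn0 => /eqP ->.
- move=> i; rewrite ltnS leqn0 => /eqP -> /=; rewrite addn0.
  apply/in_vspanE; exists [:: (K, None)]; split=> //=; first by rewrite leqnn.
  by rewrite /xval /= subst_x_None cats0.
- have -> : (fun i => s (K + (1 + i))) = (fun i => s (K.+1 + i)).
    by apply: functional_extensionality => i; rewrite addnA addn1.
  exact: ext_refl.
Qed.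

End Ext2.


Definition substn (p : seq (option nat)) (a : nat) : seq nat :=
  map (fun o => if o is Some b then b else a) p.
Definition okline (k : nat) (p : seq (option nat)) :=
  all (fun o => if o is Some b then b < k else true) p.
Definition okword (k : nat) (x : seq nat) := all (fun b => b < k) x.

Lemma substn_cat p q a : substn (p ++ q) a = substn p a ++ substn q a.
Proof. by rewrite /substn map_cat. Qed.
Lemma substn_some x a : substn (map Some x) a = x.
Proof. by rewrite /substn -map_comp map_id. Qed.
Lemma size_substn p a : size (substn p a) = size p.
Proof. by rewrite size_map. Qed.
Lemma okword_substn k p a : okline k p -> a < k -> okword k (substn p a).
Proof.
move=> /allP hp ha; apply/allP => b /mapP [o ho ->]; case: o ho => [c|] // /hp //.
Qed.
Lemma okline_cat k p q : okline k (p ++ q) = okline k p && okline k q.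
Proof. by rewrite /okline all_cat. Qed.
Lemma okline_some k x : okline k (map Some x) = okword k x.
Proof. by rewrite /okline all_map. Qed.
Lemma okline_mono k k' p : k <= k' -> okline k p -> okline k' p.
Proof. move=> hk /allP hp; apply/allP => [[b|]] // /hp h; exact: leq_trans h hk. Qed.
Lemma okword_cat k x y : okword k (x ++ y) = okword k x && okword k y.
Proof. by rewrite /okword all_cat. Qed.

Definition HJn (t : nat) : Prop := forall C : finType, exists N, forall c : seq nat -> C,
  exists p, [/\ size p = N, None \in p, okline t p &
     forall a b, a < t -> b < t -> c (substn p a) = c (substn p b)].

Lemma HJ0 : HJn 0.
Proof. move=> C; exists 1 => c; exists [:: None]; split=> //. Qed.

Lemma uniq_all (C : finType) (s : seq C) : uniq s -> size s = #|C| -> forall x, x \in s.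
Proof.
move=> us hs x; apply/negPn/negP => hx.
have sub : {subset s <= predC1 x}.
  move=> y hy; rewrite !inE; apply/eqP => e; by move: hx; rewrite -e hy.
have := subset_leq_card (introT subsetP sub).
rewrite cardC1 (card_uniqP us) hs.
have hC : 0 < #|C| by apply/card_gt0P; exists x.
by case: #|C| hs hC => [|n] hs hC //=; rewrite ltnn.
Qed.

Section Step.
Variable t : nat.
Hypothesis IH : HJn t.
Variable C : finType.

Definition Foc (s : nat) : Prop := exists N, forall c : seq nat -> C,
  (exists p, [/\ size p = N, None \in p, okline t.+1 p &
     forall a b, a < t.+1 -> b < t.+1 -> c (substn p a) = c (substn p b)])
  \/ (exists f (pcs : seq (seq (option nat) * C)),
       [/\ size f = N, okword t.+1 f, size pcs = s, uniq (map snd pcs) &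
        forall pc, pc \in pcs ->
           [/\ size pc.1 = N, None \in pc.1, okline t.+1 pc.1, substn pc.1 t = f &
               forall a, a < t -> c (substn pc.1 a) = pc.2]]).

Lemma Foc0 : Foc 0.
Proof. exists 0 => c; right; exists [::], [::]; split=> //. Qed.

Lemma tuple_of (n : nat) (x : seq nat) : size x = n -> okword t.+1 x ->
  exists xt : n.-tuple 'I_t.+1, map val xt = x.
Proof.
move=> hs hx.
have sz : size (map (@inord t) x) == n by rewrite size_map hs.
exists (Tuple sz) => /=; rewrite -map_comp -[RHS]map_id; apply/eq_in_map => b hb /=.
by rewrite inordK //; move/allP: hx => /(_ b hb).
Qed.

Lemma FocS s : Foc s -> Foc s.+1.
Proof.
move=> [n Hn].
have [m Hm] := IH {ffun n.-tuple 'I_t.+1 -> C}.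
exists (n + m) => c.
pose c' := fun y : seq nat => [ffun x : n.-tuple 'I_t.+1 => c (map val x ++ y)].
have [L [L1 L2 L3 L4]] := Hm c'.
have K1 : forall x, size x = n -> okword t.+1 x -> forall a, a < t ->
    c (x ++ substn L a) = c (x ++ substn L 0).
  move=> x hs hx a ha; have [xt <-] := tuple_of hs hx.
  have := L4 a 0 ha (leq_ltn_trans (leq0n _) ha).
  by move=> H; have := congr1 (fun F : {ffun n.-tuple 'I_t.+1 -> C} => F xt) H; rewrite /= !ffunE.
have okL0 : okword t.+1 (substn L 0).
  by apply: okword_substn => //; apply: okline_mono L3.
pose c'' := fun x => c (x ++ substn L 0).
have monoline : forall p, size p = n -> None \in p -> okline t.+1 p ->
    (forall a b, a < t.+1 -> b < t.+1 -> c'' (substn p a) = c'' (substn p b)) ->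
    exists p', [/\ size p' = n + m, None \in p', okline t.+1 p' &
     forall a b, a < t.+1 -> b < t.+1 -> c (substn p' a) = c (substn p' b)].
  move=> p p1 p2 p3 p4; exists (p ++ map Some (substn L 0)); split.
  - by rewrite size_cat size_map size_substn p1 L1.
  - by rewrite mem_cat p2.
  - by rewrite okline_cat p3 okline_some.
  - by move=> a b ha hb; rewrite !substn_cat !substn_some; apply: p4.
case: (Hn c'') => [[p [p1 p2 p3 p4]]|[f [pcs [f1 f2 f3 f4 f5]]]].
  by left; apply: monoline p1 p2 p3 p4.
case: (boolP (c'' f \in map snd pcs)) => hcol.
  left; move/mapP: hcol => [pc hpc hpc2].
  have [q1 q2 q3 q4 q5] := f5 pc hpc.
  apply: (monoline pc.1) => //.
  have key : forall a, a < t.+1 -> c'' (substn pc.1 a) = pc.2.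
    move=> a; rewrite ltnS leq_eqVlt => /orP [/eqP ->|ha]; last exact: q5.
    by rewrite q4 hpc2.
  by move=> a b ha hb; rewrite !key.
right; exists (f ++ substn L t).
exists ((map Some f ++ L, c'' f) :: [seq (pc.1 ++ L, pc.2) | pc <- pcs]); split.
- by rewrite size_cat f1 size_substn L1.
- by rewrite okword_cat f2 /=; apply: okword_substn => //; apply: okline_mono L3.
- by rewrite /= size_map f3.
- by rewrite /= -map_comp /= hcol.
move=> pc; rewrite inE => /orP [/eqP -> /=|/mapP [pc0 hpc0 ->] /=].
  split.
  - by rewrite size_cat size_map f1 L1.
  - by rewrite mem_cat L2 orbT.
  - by rewrite okline_cat okline_some f2; apply: okline_mono L3.
  - by rewrite substn_cat substn_some.
  - by move=> a ha; rewrite substn_cat substn_some K1.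
have [q1 q2 q3 q4 q5] := f5 pc0 hpc0; split.
- by rewrite size_cat q1 L1.
- by rewrite mem_cat q2.
- by rewrite okline_cat q3; apply: okline_mono L3.
- by rewrite substn_cat q4.
- move=> a ha; rewrite substn_cat K1 ?size_substn //; first exact: q5.
  by apply: okword_substn => //; apply: ltnW.
Qed.

Lemma Foc_all s : Foc s.
Proof. elim: s => [|s IHs]; [exact: Foc0|exact: FocS]. Qed.

Lemma HJ_step_C : exists N, forall c : seq nat -> C,
  exists p, [/\ size p = N, None \in p, okline t.+1 p &
     forall a b, a < t.+1 -> b < t.+1 -> c (substn p a) = c (substn p b)].
Proof.
have [N HN] := Foc_all #|C|; exists N => c.
case: (HN c) => [//|[f [pcs [f1 f2 f3 f4 f5]]]].
have : c f \in map snd pcs by apply: uniq_all => //; rewrite size_map.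
move/mapP => [pc hpc hpc2]; have [q1 q2 q3 q4 q5] := f5 pc hpc.
exists pc.1; split=> //.
have key : forall a, a < t.+1 -> c (substn pc.1 a) = pc.2.
  move=> a; rewrite ltnS leq_eqVlt => /orP [/eqP ->|ha]; last exact: q5.
  by rewrite q4 hpc2.
by move=> a b ha hb; rewrite !key.
Qed.
End Step.

Lemma HJ_nat t : HJn t.
Proof. elim: t => [|t IHt]; [exact: HJ0|move=> C; exact: HJ_step_C]. Qed.

Theorem HJ (A : finType) (a0 : A) (C : finType) : exists N, forall c : seq A -> C,
  exists p : xword A, [/\ size p = N, None \in p & forall a b, c (subst_c p a) = c (subst_c p b)].
Proof.
have [N HN] := HJ_nat #|A| C; exists N => c.
pose g := fun i => nth a0 (enum A) i.
have [p' [p1 p2 p3 p4]] := HN (fun w => c (map g w)).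
exists (map (omap g) p'); split.
- by rewrite size_map.
- by apply/mapP; exists None.
have E : forall a, subst_c (map (omap g) p') a = map g (substn p' (index a (enum A))).
  move=> a; rewrite /subst_c /substn -!map_comp; apply: eq_map => [[b|]] //=.
  by rewrite /g nth_index // mem_enum.
have hi : forall a, index a (enum A) < #|A| by move=> a; rewrite cardE index_mem mem_enum.
by move=> a b; rewrite !E; apply: p4.
Qed.


Definition pb (P : Prop) : bool := if excluded_middle_informative P then true else false.
Lemma pbE P : pb P = true <-> P.
Proof. by rewrite /pb; case: excluded_middle_informative. Qed.

Section Crep.
Variable A : finType.
Implicit Types (s u t r : nat -> xword A).

Definition crep r b (y : word A) := exists ls : seq (nat * A),
  [/\ pairwise ltn (map fst ls), all (fun i => i < b) (map fst ls) & y = cval r ls].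

Lemma crep_nil r b : crep r b [::].
Proof. by exists [::]. Qed.

Lemma crep_weak r b b' y : crep r b y -> b <= b' -> crep r b' y.
Proof.
move=> [ls [h1 h2 h3]] hb; exists ls; split=> //.
by apply: sub_all h2 => i hi; apply: leq_trans hi hb.
Qed.

Lemma crep_snoc r b y a : crep r b y -> crep r b.+1 (y ++ subst_c (r b) a).
Proof.
move=> [ls [h1 h2 ->]]; exists (rcons ls (b, a)); split.
- by rewrite map_rcons pairwise_rcons h1 andbT.
- by rewrite map_rcons all_rcons /= ltnSn /=; apply: sub_all h2 => i hi; apply: ltnW.
- by rewrite -cats1 cval_cat /cval /= cats0.
Qed.

Lemma crep_split r b y : crep r b.+1 y ->
  crep r b y \/ exists y' a, crep r b y' /\ y = y' ++ subst_c (r b) a.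
Proof.
move=> [ls [h1 h2 ->]]; case/lastP: ls h1 h2 => [|ls q] h1 h2; first by left; exists [::].
rewrite map_rcons pairwise_rcons in h1; case/andP: h1 => hq h1.
rewrite map_rcons all_rcons in h2; case/andP: h2 => hqb h2.
have ecv : cval r (rcons ls q) = cval r ls ++ subst_c (r q.1) q.2.
  by rewrite -cats1 cval_cat /cval /= cats0.
rewrite ecv; case: (ltnP q.1 b) => hqb2.
- left; exists (rcons ls q); split.
  + by rewrite map_rcons pairwise_rcons hq h1.
  + by rewrite map_rcons all_rcons hqb2 /=; apply: sub_all hq => i hi; apply: ltn_trans hi hqb2.
  + by rewrite ecv.
- have eq : q.1 = b by apply/eqP; rewrite eqn_leq -ltnS hqb.
  right; exists (cval r ls), q.2; split; last by rewrite eq.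
  by exists ls; split=> //; rewrite -eq.
Qed.

Fixpoint CL r b : seq (word A) :=
  if b is b'.+1 then CL r b' ++ [seq y ++ subst_c (r b') a | y <- CL r b', a <- enum A]
  else [:: [::]].

Lemma CL_sound r b y : y \in CL r b -> crep r b y.
Proof.
elim: b y => [|b IH] y /=; first by rewrite inE => /eqP ->; exact: crep_nil.
rewrite mem_cat => /orP [/IH h|/allpairsP [[y' a] [hy' _ ->]] /=].
  exact: crep_weak h (leqnSn _).
apply: crep_snoc; exact: IH.
Qed.

Lemma CL_complete r b y : crep r b y -> y \in CL r b.
Proof.
elim: b y => [|b IH] y.
  by move=> [[|q ls] [h1 h2 ->]] //; rewrite mem_head.
move/crep_split => [/IH h|[y' [a [/IH h ->]]]] /=; rewrite mem_cat; first by rewrite h.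
by rewrite (allpairs_f (fun y a => y ++ subst_c (r b) a) h (mem_enum _ a)) orbT.
Qed.
End Crep.

Section HBL.
Variables (A : finType) (a0 : A).
Implicit Types (s u t r : nat -> xword A).

Definition Tr r (tr : bool) e (a : A) : word A := if tr then subst_c (r e) a else [::].
Definition blk b (p : xword A) : seq (nat * option A) := zip (iota b (size p)) p.
Definition trl (tr : bool) e : seq (nat * option A) := if tr then [:: (e, None)] else [::].

Lemma map_zip2 (T1 T2 T3 : Type) (f : T2 -> T3) (I : seq T1) (p : seq T2) :
  [seq (q.1, f q.2) | q <- zip I p] = zip I (map f p).
Proof. elim: I p => [|i I IH] [|x p] //=; by rewrite IH. Qed.

Lemma subst_c_blk r b p a :
  subst_c (xval r (blk b p)) a = cval r (zip (iota b (size p)) (subst_c p a)).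
Proof. by rewrite subst_c_xval /blk (map_zip2 (fun o => csub o a)). Qed.

Lemma subst_c_trl r tr e a : subst_c (xval r (trl tr e)) a = Tr r tr e a.
Proof. by case: tr => //=; rewrite /xval /= cats0 subst_x_None. Qed.

Lemma vseq_xval r ls : vseq r -> None \in map snd ls -> None \in xval r ls.
Proof.
move=> hr /mapP [q hq hq2]; apply/flattenP; exists (subst_x (r q.1) q.2); first exact: map_f.
by rewrite -hq2 subst_x_None; apply: hr.
Qed.

Lemma ext_blocks t s (mm : nat -> nat) : mm 0 = 0 -> (forall i, mm i < mm i.+1) ->
  (forall i, in_vspan s (mm i) (Some (mm i.+1).-1) (t i)) -> extracted t s.
Proof. by move=> h0 h1 h2 l; exists mm; split. Qed.

Lemma unzip1_blk b p : map fst (blk b p) = iota b (size p).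
Proof. by rewrite /blk -/(unzip1 _) unzip1_zip // size_iota. Qed.
Lemma unzip2_blk b p : map snd (blk b p) = p.
Proof. by rewrite /blk -/(unzip2 _) unzip2_zip // size_iota. Qed.

Theorem HBL r (G : word A -> Prop) (tr : bool) :
  vseq r ->
  (forall b (p : xword A) y a', None \in p -> crep r b y ->
     (forall a, G (y ++ cval r (zip (iota b (size p)) (subst_c p a)) ++ Tr r tr (b + size p) a')) -> False) ->
  exists r', [/\ vseq r', extracted r' r & forall z, in_cspan r' 0 None z -> ~ G z].
Proof.
move=> hr H.
pose Y b := [seq (y, a) | y <- CL r b, a <- enum A].
pose col b (al : seq A) : (size (Y b)).-tuple bool :=
  map_tuple (fun ya => pb (G (ya.1 ++ cval r (zip (iota b (size al)) al) ++ Tr r tr (b + size al) ya.2)))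
    (in_tuple (Y b)).
have [P HP] := @fchoice _ [:: None] (fun _ => True) (fun b p => None \in p /\
   forall a a', col b (subst_c p a) = col b (subst_c p a')) (fun b _ =>
   let: ex_intro N HN := HJ a0 ((size (Y b)).-tuple bool) in
   let: ex_intro p (And3 _ h1 h2) := HN (col b) in ex_intro _ p (conj h1 h2)).
have F1 : forall b, 0 < size (P b).
  by move=> b; case: (HP b I); case: (P b).
pose bs k := iter k (fun b => b + size (P b) + tr) 0.
pose R k := blk (bs k) (P (bs k)) ++ trl tr (bs k + size (P (bs k))).
pose r' k := xval r (R k).
have F2 : forall k, bs k.+1 = bs k + size (P (bs k)) + tr by [].
have F3 : forall k, bs k < bs k.+1.
  move=> k; rewrite F2 -addnA -{1}(addn0 (bs k)) ltn_add2l; exact: (leq_trans (F1 _) (leq_addr _ _)).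
have F4 : forall k, map fst (R k) = iota (bs k) (size (P (bs k))) ++
    (if tr then [:: bs k + size (P (bs k))] else [::]).
  by move=> k; rewrite map_cat unzip1_blk /trl; case: (tr).
have F5 : forall k, pairwise ltn (map fst (R k)) /\
    all (fun i => bs k <= i < bs k.+1) (map fst (R k)).
  move=> k; rewrite F4 F2; split.
  - rewrite pairwise_cat -sorted_pairwise ?iota_ltn_sorted; last exact: ltn_trans.
    case: (tr) => //=; rewrite !andbT; apply/allrelP => i j hi //.
    rewrite mem_seq1 => /eqP ->; move: hi; rewrite mem_iota => /andP [] _ /=.
    by rewrite addnC.
  - rewrite all_cat; apply/andP; split.
      apply/allP => i; rewrite mem_iota => /andP [-> h] /=; exact: leq_trans h (leq_addr _ _).
    case: (tr) => //=; by rewrite leq_addr /= andbT addn1.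
have F6 : forall k, None \in map snd (R k).
  by move=> k; rewrite map_cat mem_cat unzip2_blk; case: (HP (bs k) I) => -> _.
have Fmono : forall j j', j < j' -> bs j.+1 <= bs j'.
  move=> j j' hjj'.
  have hm : forall i, 0 <= i <= j' -> bs i < bs i.+1 by move=> i _; exact: F3.
  exact: (mono_mm_le hm (i:=j.+1) (j:=j') (leq0n _) hjj' (leqnSn _)).
have Fsub : forall k a, subst_c (r' k) a =
    cval r (zip (iota (bs k) (size (P (bs k)))) (subst_c (P (bs k)) a)) ++
    Tr r tr (bs k + size (P (bs k))) a.
  by move=> k a; rewrite /r' /R xval_cat subst_c_cat subst_c_blk subst_c_trl.
exists r'; split.
- by move=> k; apply: vseq_xval.
- apply: (ext_blocks (mm := bs)) => // i; apply/in_vspanE; exists (R i); split => //.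
  + by rewrite -size_eq0 -(size_map fst) F4 size_cat size_iota -lt0n ltn_addr ?F1.
  + by case: (F5 i).
  + case: (F5 i) => _ /allP h; apply/allP => j /h /andP [-> hj] /=.
    by rewrite -F2; move: hj; case: (bs i.+1).
- move=> z /in_cspanE [ls [l1 l2 ->]] HG.
  case/lastP: ls l1 l2 HG => [//|ls0 [k a]] _ l2.
  rewrite map_rcons pairwise_rcons in l2; case/andP: l2 => hk l2.
  rewrite -cats1 cval_cat {2}/cval /= cats0 Fsub.
  set b := bs k; set y := cval r' ls0 => HG.
  have hy : crep r b y.
    have S1 : forall j, j \in map fst ls0 -> pairwise ltn (map fst (R j)) /\
        all (fun i => bs j <= i < bs j.+1) (map fst (R j)) by move=> j _; exact: F5.
    have S2 : forall j j', j \in map fst ls0 -> j' \in map fst ls0 -> j < j' -> bs j.+1 <= bs j'.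
      by move=> j j' _ _; exact: Fmono.
    have [P1 P2] := @blocks_gen (map fst ls0) (fun j => map fst (R j)) bs (fun j => bs j.+1) l2 S1 S2.
    exists (ccomp ls0 R); split.
    + by rewrite ccomp_idx.
    + apply/allP => i; rewrite ccomp_idx => /P2 [j hj /andP [_ h]].
      apply: leq_trans h _; apply: Fmono; by move/allP: hk => /(_ j hj).
    + by apply: cval_comp.
  apply: (H b (P b) y a (proj1 (HP b I)) hy) => a'.
  have E := proj2 (HP b I) a a'.
  have E2 := congr1 val E; rewrite /= in E2.
  have := proj2 (eq_in_map _ _ _) E2 (y, a).
  have hya : (y, a) \in Y b by apply: allpairs_f; [exact: CL_complete|exact: mem_enum].
  move/(_ hya) => /=; rewrite !size_map => E3.
  apply/pbE; rewrite -E3; apply/pbE; exact: HG.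
Qed.
End HBL.


Section L6.
Variable A : finType.
Implicit Types (s u t r : nat -> xword A).

Lemma somes_cval r (ls : seq (nat * A)) a :
  subst_c (xval r [seq (q.1, Some q.2) | q <- ls]) a = cval r ls.
Proof.
rewrite subst_c_xval -map_comp; congr cval; rewrite -[RHS]map_id; apply: eq_map => [[i b]] //.
Qed.

Lemma line_word r b y (p : xword A) : crep r b y -> None \in p ->
  exists v, in_vspan r 0 (Some (b + size p).-1) v /\
    forall a, subst_c v a = y ++ cval r (zip (iota b (size p)) (subst_c p a)).
Proof.
move=> [ls [h1 h2 ->]] hp.
have hsz : 0 < size p by case: p hp.
exists (xval r ([seq (q.1, Some q.2) | q <- ls] ++ blk b p)); split; last first.
  by move=> a; rewrite xval_cat subst_c_cat somes_cval subst_c_blk.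
apply/in_vspanE; eexists; split; last reflexivity.
- rewrite -size_eq0 size_cat /blk size_zip size_iota minnn -lt0n; exact: leq_trans hsz (leq_addl _ _).
- rewrite map_cat unzip1_blk -map_comp pairwise_cat; apply/and3P; split.
  + apply/allrelP => i j /mapP [q hq ->] /=; rewrite mem_iota => /andP [hbj _].
    apply: leq_trans hbj; by move/allP: h2 => /(_ q.1 (map_f _ hq)).
  + by have -> : [seq (fst \o (fun q : nat * A => (q.1, Some q.2))) x | x <- ls] = map fst ls
      by apply: eq_map.
  + by rewrite -sorted_pairwise ?iota_ltn_sorted //; apply: ltn_trans.
- have hle : forall i, i < b + size p -> i <= (b + size p).-1 by move=> i; case: (b + size p).
  rewrite map_cat unzip1_blk all_cat; apply/andP; split.
  + rewrite -map_comp all_map; apply/allP => q hq /=; apply: hle.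
    have := allP h2 q.1 (map_f _ hq) => h; apply: leq_trans h _; by rewrite leq_addr.
  + apply/allP => i; rewrite mem_iota => /andP [_ h] /=; exact: hle.
- by rewrite map_cat mem_cat unzip2_blk hp orbT.
Qed.

Lemma line_lemma (a0 : A) D (G : word A -> Prop) : vseq D -> large G D ->
  exists M v, in_vspan D 0 (Some M) v /\ forall a, G (subst_c v a).
Proof.
move=> hD HG; apply: NNPP => Hn.
have H : forall b (p : xword A) y a', None \in p -> crep D b y ->
     (forall a, G (y ++ cval D (zip (iota b (size p)) (subst_c p a)) ++ Tr D false (b + size p) a')) -> False.
  move=> b p y a' hp hy Hall; have [v [hv hva]] := line_word hy hp.
  apply: Hn; exists (b + size p).-1, v; split=> // a; rewrite hva.
  by have := Hall a; rewrite /Tr cats0.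
have [r' [h1 h2 h3]] := @HBL A a0 D G false hD H.
have [z [hz1 hz2]] := HG r' h1 h2.
exact: h3 z hz2 hz1.
Qed.

Definition xrep r b (v : xword A) := exists ls : seq (nat * option A),
  [/\ pairwise ltn (map fst ls), all (fun i => i < b) (map fst ls) & v = xval r ls].

Lemma xrep_split r b y : xrep r b.+1 y ->
  xrep r b y \/ exists y' o, xrep r b y' /\ y = y' ++ subst_x (r b) o.
Proof.
move=> [ls [h1 h2 ->]]; case/lastP: ls h1 h2 => [|ls q] h1 h2; first by left; exists [::].
rewrite map_rcons pairwise_rcons in h1; case/andP: h1 => hq h1.
rewrite map_rcons all_rcons in h2; case/andP: h2 => hqb h2.
have ecv : xval r (rcons ls q) = xval r ls ++ subst_x (r q.1) q.2.
  by rewrite -cats1 xval_cat /xval /= cats0.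
rewrite ecv; case: (ltnP q.1 b) => hqb2.
- left; exists (rcons ls q); split.
  + by rewrite map_rcons pairwise_rcons hq h1.
  + by rewrite map_rcons all_rcons hqb2 /=; apply: sub_all hq => i hi; apply: ltn_trans hi hqb2.
  + by rewrite ecv.
- have eq : q.1 = b by apply/eqP; rewrite eqn_leq -ltnS hqb.
  right; exists (xval r ls), q.2; split; last by rewrite eq.
  by exists ls; split=> //; rewrite -eq.
Qed.

Fixpoint XL r b : seq (xword A) :=
  if b is b'.+1 then XL r b' ++ [seq y ++ subst_x (r b') o | y <- XL r b', o <- None :: map Some (enum A)]
  else [:: [::]].

Lemma XL_complete r b y : xrep r b y -> y \in XL r b.
Proof.
elim: b y => [|b IH] y.
  by move=> [[|q ls] [h1 h2 ->]] //; rewrite mem_head.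
move/xrep_split => [/IH h|[y' [o [/IH h ->]]]] /=; rewrite mem_cat; first by rewrite h.
have ho : o \in None :: map Some (enum A).
  by case: o => [c|]; rewrite ?mem_head // inE /=; apply/mapP; exists c; rewrite ?mem_enum.
by rewrite (allpairs_f (fun y o => y ++ subst_x (r b) o) h ho) orbT.
Qed.

Lemma xval_agree s s' n ls : (forall i, i <= n -> s i = s' i) ->
  all (fun i => i <= n) (map fst ls) -> xval s ls = xval s' ls.
Proof.
move=> H; elim: ls => [|q ls IH] //= /andP [hq hls].
by rewrite !xval_cons H // IH.
Qed.

Lemma vspan_agree s s' n v : (forall i, i <= n -> s i = s' i) ->
  in_vspan s 0 (Some n) v -> in_vspan s' 0 (Some n) v.
Proof.
move=> H /in_vspanE [ls [l1 l2 l3 l4 l5]]; apply/in_vspanE; exists ls; split=> //.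
by rewrite l5; apply: xval_agree H _.
Qed.

Lemma vspan_xrep s n v : in_vspan s 0 (Some n) v -> xrep s n.+1 v /\ None \in v \/ ~ vseq s.
Proof.
move=> /in_vspanE [ls [l1 l2 l3 l4 l5]].
case: (classic (vseq s)) => hs; last by right.
left; split; last by rewrite l5; apply: vseq_xval.
by exists ls; split.
Qed.

Lemma xrep_vspan s n v : xrep s n.+1 v -> None \in v -> vseq s -> in_vspan s 0 (Some n) v.
Proof.
move=> [ls [l1 l2 ->]] hN hs; apply/in_vspanE; exists ls; split=> //.
- by case: ls {l1 l2} hN.
- apply: contraLR hN => hN; apply/flattenP => [[w /mapP [q hq ->]]].
  case: q hq => i [c|] hq /=.
    by move/mapP => [[d|] _] //.
  by move=> _; move/negP: hN; apply; apply/mapP; exists (i, None).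
Qed.

Lemma fin_ext_agree t t' s l : (forall i, i <= l -> t i = t' i) ->
  fin_extracted t s l -> fin_extracted t' s l.
Proof. move=> H [mm [h0 h1 h2]]; exists mm; split=> // i hi; rewrite -H //; exact: h2. Qed.

End L6.


Section C7.
Variables (A : finType) (a0 : A).
Implicit Types (s u t r c D : nat -> xword A).

Definition Pn (G : word A -> Prop) n c := forall v', in_vspan c 0 (Some n) v' ->
  forall z, in_cspan (fun i => c (n.+1 + i)) 0 None z -> G z ->
  exists a, ~ G (subst_c v' a ++ z).

Lemma tail_aux n i : [/\ (n.+1 + i < n) = false, (n.+1 + i == n) = false & n.+1 + i - n.+1 = i].
Proof.
split; last exact: addKn.
- by apply/negbTE; rewrite -leqNgt; apply: leq_trans (leqnSn n) (leq_addr i n.+1).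
- apply/negbTE; rewrite neq_ltn; apply/orP; right; exact: leq_addr.
Qed.

Lemma T0 c : (fun i => c (0 + i)) = c.
Proof. by apply: functional_extensionality. Qed.

Lemma vspan_vseq s m k v : vseq s -> in_vspan s m (Some k) v -> None \in v.
Proof. move=> hs /in_vspanE [ls [_ _ _ l4 ->]]; exact: vseq_xval. Qed.

Lemma xrep_agree s s' b v : (forall i, i < b -> s i = s' i) -> xrep s b v -> xrep s' b v.
Proof.
case: b => [|n] H [ls [l1 l2 ->]]; exists ls; split=> //.
  by case: ls l1 l2 => [|q ls] //=.
apply: (xval_agree (n := n)) => //; apply/allP => i hi; by move/allP: l2 => /(_ i hi).
Qed.

Lemma StepC D (G : word A -> Prop) : large G D ->
  (forall u, vseq u -> extracted u D -> exists u', [/\ vseq u', extracted u' (fun i => u (1 + i)) &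
     forall z, in_cspan u' 0 None z -> G z -> exists a, ~ G (subst_c (u 0) a ++ z)]) ->
  forall n c, vseq c -> extracted c D -> exists c', [/\ vseq c', (forall i, i < n -> c' i = c i),
    (forall k, k <= n -> extracted (fun i => c' (k + i)) (fun i => c (k + i))),
    (forall a, G (subst_c (c' n) a)) & Pn G n c'].
Proof.
move=> HG Neg n c hc hcD.
have hL : large G (fun i => c (n + i)) := large_ext HG (ext_trans (ext_tail c n) hcD).
have hvT : vseq (fun i => c (n + i)) by move=> i; apply: hc.
have [M [v [hv hvG]]] := line_lemma a0 hvT hL.
have hvN : None \in v := vspan_vseq hvT hv.
pose E0 := fun i => c (n + M.+1 + i).
pose c1 E := fun i => if i < n then c i else if i == n then v else E (i - n.+1).
have c1agree : forall E E' i, i <= n -> c1 E i = c1 E' i.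
  move=> E E' i hi; rewrite /c1; case: ltnP => // hni.
  by rewrite (_ : (i == n) = true) // eqn_leq hi hni.
have X : forall E, vseq E -> extracted E E0 -> vseq (c1 E) /\
    forall k, k <= n -> extracted (fun i => c1 E (k + i)) (fun i => c (k + i)).
  move=> E hE hEE; split.
    move=> i; rewrite /c1; case: ltnP => _; first exact: hc.
    by case: eqP => _ //; apply: hE.
  move=> k hk.
  apply: (glue (j := (n - k).+1) (K := n - k + M.+1) (mm := fun i => if i <= n - k then i else n - k + M.+1)).
  - by [].
  - move=> i; rewrite ltnS => hi; rewrite hi; case: (ltnP i (n - k)) => h //.
    have -> : i = n - k by apply/eqP; rewrite eqn_leq hi.
    by rewrite -[X in X < _]addn0 ltn_add2l.
  - by rewrite ltnn.
  - move=> i; rewrite ltnS => hi; rewrite hi.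
    case: (ltnP i (n - k)) => hik.
      rewrite /c1 (_ : k + i < n); last by rewrite -ltn_subRL.
      exact: (vspan_single (fun j => c (k + j)) i).
    have ei : i = n - k by apply/eqP; rewrite eqn_leq hi.
    subst i; rewrite /c1 subnKC // ltnn eqxx.
    have := vspan_shift (s := fun i => c (k + i)) (K := n - k) (m := 0) (k := M) (w := v).
    rewrite addn0 -subn1 -addnBA // subn1 /=; apply.
    have -> : (fun i => c (k + (n - k + i))) = (fun i => c (n + i)).
      by apply: functional_extensionality => i; rewrite addnA subnKC.
    exact: hv.
  - have -> : (fun i => c1 E (k + ((n - k).+1 + i))) = E.
      apply: functional_extensionality => i; rewrite /c1 addnA addnS subnKC //.
      by case: (tail_aux n i) => -> -> ->.
    have -> : (fun i => c (k + (n - k + M.+1 + i))) = E0.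
      by apply: functional_extensionality => i; rewrite /E0 !addnA subnKC.
    exact: hEE.
have c1D : forall E, vseq E -> extracted E E0 -> extracted (c1 E) D.
  move=> E hE hEE; have [_ h] := X E hE hEE; have := h 0 (leq0n _); rewrite !T0 => h0.
  exact: ext_trans h0 hcD.
pose c0 := c1 E0.
have hE0 : vseq E0 by move=> i; apply: hc.
have Loop : forall L : seq (xword A), exists E', [/\ vseq E', extracted E' E0 &
    forall v', v' \in L -> None \in v' -> xrep c0 n.+1 v' ->
      forall z, in_cspan E' 0 None z -> G z -> exists a, ~ G (subst_c v' a ++ z)].
  elim=> [|v' L [E1 [hE1 hE1E IH]]]; first by exists E0; split=> //; exact: ext_refl.
  case: (classic (None \in v' /\ xrep c0 n.+1 v')) => [[hN hx]|hno]; last first.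
    exists E1; split=> // v''; rewrite inE => /orP [/eqP ->|hv''] hN hx; last exact: IH.
    by case: hno.
  pose u := fun i => if i is i'.+1 then E1 i' else v'.
  have hu : vseq u by case=> [|i] //=; apply: hE1.
  have [hc1 _] := X E1 hE1 hE1E.
  have huc : extracted u (c1 E1).
    apply: (glue (j := 1) (K := n.+1) (mm := fun i => if i is 0 then 0 else n.+1)) => //.
    + by case.
    + case=> // _ /=; apply: xrep_vspan => //.
      apply: xrep_agree hx => i hi; exact: c1agree.
    + have -> : (fun i => u (1 + i)) = (fun i => c1 E1 (n.+1 + i)).
        apply: functional_extensionality => i; rewrite /u /c1 /=.
        by case: (tail_aux n i) => -> -> ->.
      exact: ext_refl.
  have [u' [hu' hu'u hu'P]] := Neg u hu (ext_trans huc (c1D E1 hE1 hE1E)).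
  have eT : (fun i => u (1 + i)) = E1 by apply: functional_extensionality.
  rewrite eT in hu'u.
  exists u'; split=> //; first exact: ext_trans hu'u hE1E.
  move=> v''; rewrite inE => /orP [/eqP ->|hv''] hN' hx' z hz HGz.
    exact: hu'P.
  by apply: IH => //; apply: cspan_ext hu'u hz.
have [Es [hEs hEsE HEs]] := Loop (XL c0 n.+1).
have [hc' hc'T] := X Es hEs hEsE.
exists (c1 Es); split=> //.
- by move=> i hi; rewrite /c1 hi.
- by move=> a; rewrite /c1 ltnn eqxx.
- move=> v' hv' z hz HGz.
  have eT : (fun i => c1 Es (n.+1 + i)) = Es.
    apply: functional_extensionality => i; rewrite /c1.
    by case: (tail_aux n i) => -> -> ->.
  rewrite eT in hz.
  case: (vspan_xrep hv') => [[hx hN]|//].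
  apply: HEs => //; first by apply: XL_complete; apply: xrep_agree hx => i hi; exact: c1agree.
  by apply: xrep_agree hx => i hi; exact: c1agree.
Qed.

End C7.


Lemma choice2 (X Y Z : Type) (R : X -> Y -> Z -> Prop) :
  (forall x y, exists z, R x y z) -> exists f : X -> Y -> Z, forall x y, R x y (f x y).
Proof.
move=> H; exists (fun x y => proj1_sig (constructive_indefinite_description _ (H x y))).
by move=> x y; exact: proj2_sig (constructive_indefinite_description _ (H x y)).
Qed.

Section C8.
Variables (A : finType) (a0 : A).
Implicit Types (s u t r c D : nat -> xword A).

Lemma iterate_seq D (Inv : nat -> (nat -> xword A) -> Prop) (Q : nat -> (nat -> xword A) -> Prop) :
  Inv 0 D ->
  (forall n c, Inv n c -> exists c', [/\ Inv n.+1 c', vseq c', (forall i, i < n -> c' i = c i),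
      (forall k, k <= n -> extracted (fun i => c' (k + i)) (fun i => c (k + i))) & Q n c']) ->
  exists cs : nat -> nat -> xword A,
    [/\ cs 0 = D, forall n, Inv n (cs n), forall n, Q n (cs n.+1),
        forall m i m', i < m -> m <= m' -> cs m' i = cs m i &
        forall n, extracted (fun i => cs (n + i).+1 (n + i)) (fun i => cs n (n + i))].
Proof.
move=> H0 Hstep.
have [f Hf] := @choice2 nat (nat -> xword A) (nat -> xword A) (fun n c c' => Inv n c ->
  [/\ Inv n.+1 c', vseq c', (forall i, i < n -> c' i = c i),
      (forall k, k <= n -> extracted (fun i => c' (k + i)) (fun i => c (k + i))) & Q n c'])
  (fun n c => match classic (Inv n c) with
     | or_introl h => let: ex_intro c' hc' := Hstep n c h in ex_intro _ c' (fun _ => hc')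
     | or_intror h => ex_intro _ c (fun h' => False_ind _ (h h')) end).
pose cs := fix cs n := if n is n'.+1 then f n' (cs n') else D.
have Hinv : forall n, Inv n (cs n) by elim=> [//|n IH]; case: (Hf n (cs n) IH).
have Hp : forall n, [/\ Inv n.+1 (cs n.+1), vseq (cs n.+1), (forall i, i < n -> cs n.+1 i = cs n i),
      (forall k, k <= n -> extracted (fun i => cs n.+1 (k + i)) (fun i => cs n (k + i))) & Q n (cs n.+1)].
  by move=> n; exact: Hf n (cs n) (Hinv n).
have Hagree : forall m i m', i < m -> m <= m' -> cs m' i = cs m i.
  move=> m i m' him; elim: m' => [|m' IH]; first by rewrite leqn0 => /eqP ->.
  rewrite leq_eqVlt => /orP [/eqP <-//|hm].
  case: (Hp m') => _ _ h _ _; rewrite h ?IH //; exact: leq_trans him hm.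
have HT : forall n m, n <= m -> extracted (fun i => cs m (n + i)) (fun i => cs n (n + i)).
  move=> n m hnm; elim: m hnm => [|m IH].
    by rewrite leqn0 => /eqP ->; exact: ext_refl.
  rewrite leq_eqVlt => /orP [/eqP <-|hm]; first exact: ext_refl.
  case: (Hp m) => _ _ _ h _; apply: ext_trans (h n hm) (IH hm).
exists cs; split=> //.
- by move=> n; case: (Hp n).
- move=> n l; apply: (fin_ext_agree (t := fun i => cs (n + l).+1 (n + i))); last exact: HT _ _ (leqW (leq_addr _ _)) l.
  move=> i hi; apply: Hagree => //; by rewrite ltnS leq_add2l.
Qed.

End C8.

Section C9.
Variables (A : finType) (a0 : A).
Implicit Types (s u t r c D : nat -> xword A).

Theorem Cprime D (G : word A -> Prop) : vseq D -> large G D ->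
  exists u, [/\ vseq u, extracted u D &
    large (fun z => G z /\ forall a, G (subst_c (u 0) a ++ z)) (fun i => u (1 + i))].
Proof.
move=> hD HG; apply: NNPP => NC.
have Neg : forall u, vseq u -> extracted u D -> exists u', [/\ vseq u', extracted u' (fun i => u (1 + i)) &
     forall z, in_cspan u' 0 None z -> G z -> exists a, ~ G (subst_c (u 0) a ++ z)].
  move=> u hu huD; apply: NNPP => hn; apply: NC; exists u; split=> // w hw hwe.
  apply: NNPP => hz; apply: hn; exists w; split=> // z hzc hGz.
  apply: NNPP => hna; apply: hz; exists z; split=> //; split=> // a.
  by apply: NNPP => hGa; apply: hna; exists a.
have Step := StepC a0 HG Neg.
have Hstep : forall n c, vseq c /\ extracted c D -> exists c',
   [/\ vseq c' /\ extracted c' D, vseq c', (forall i, i < n -> c' i = c i),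
      (forall k, k <= n -> extracted (fun i => c' (k + i)) (fun i => c (k + i))) &
      (forall a, G (subst_c (c' n) a)) /\ Pn G n c'].
  move=> n c [hc hcD]; have [c' [h1 h2 h3 h4 h5]] := Step n c hc hcD.
  exists c'; split=> //; split=> //.
  have := h3 0 (leq0n _); rewrite T0 (T0 c) => h; exact: ext_trans h hcD.
have [cs [c0 cinv cQ cag cT]] := @iterate_seq A D (fun n c => vseq c /\ extracted c D)
   (fun n c => (forall a, G (subst_c (c n) a)) /\ Pn G n c) (conj hD (ext_refl D)) Hstep.
pose r := fun i => cs i.+1 i.
have hr : vseq r by move=> i; case: (cinv i.+1) => h _; apply: h.
have rT : forall n, extracted (fun i => r (n + i)) (fun i => cs n (n + i)) := cT.
have rD : extracted r D by have := rT 0; rewrite T0 (T0 (cs 0)) c0.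
have H : forall b (p : xword A) y a', None \in p -> crep r b y ->
     (forall a, G (y ++ cval r (zip (iota b (size p)) (subst_c p a)) ++ Tr r true (b + size p) a')) -> False.
  move=> b p y a' hp hy Hall.
  have [v [hv hva]] := line_word hy hp.
  have hsz : 0 < size p by rewrite lt0n size_eq0; apply/eqP => ep; rewrite ep in hp.
  have ee : b + size p = (b + size p).-1.+1.
    by rewrite prednK //; apply: leq_trans hsz (leq_addl _ _).
  move: hv Hall ee; move: (b + size p) => e hv Hall ee.
  move: hv ee; move: e.-1 => n hv ee.
  have hv' : in_vspan (cs n.+1) 0 (Some n) v.
    apply: vspan_agree hv => i hi; rewrite /r; symmetry; apply: cag => //.
  have hz : in_cspan (fun i => cs n.+1 (n.+1 + i)) 0 None (subst_c (r e) a').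
    apply: cspan_ext (rT n.+1) _; rewrite -ee.
    have := cspan_single (fun i => r (e + i)) 0 a'; by rewrite addn0.
  have HGz : G (subst_c (r e) a') by rewrite /r; case: (cQ e).
  have [a ha] := proj2 (cQ n) v hv' _ hz HGz.
  apply: ha; rewrite hva -catA; exact: Hall a.
have [r' [h1 h2 h3]] := @HBL A a0 r G true hr H.
have [z [hz1 hz2]] := HG r' h1 (ext_trans h2 rD).
exact: h3 z hz2 hz1.
Qed.
End C9.


Section Main.
Variable A : finType.
Implicit Types (s u t r c D : nat -> xword A).

Fixpoint Gs (E : word A -> Prop) c n : word A -> Prop :=
  if n is n'.+1 then fun z => Gs E c n' z /\ forall a, Gs E c n' (subst_c (c n') a ++ z) else E.

Lemma Gs_agree E c c' n : (forall i, i < n -> c i = c' i) -> forall z, Gs E c n z <-> Gs E c' n z.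
Proof.
elim: n => [|n IH] H z //=.
have IH' := IH (fun i hi => H i (ltnW hi)).
rewrite H //; split=> [[h1 h2]|[h1 h2]]; split.
- by apply/IH'.
- by move=> a; apply/IH'.
- by apply/IH'.
- by move=> a; apply/IH'.
Qed.

Lemma Gs_sound E (w : nat -> xword A) m z : Gs E w m z -> E z /\ forall f, crep w m f -> E (f ++ z).
Proof.
elim: m z => [|m IH] z /=.
  move=> hz; split=> // f [[|q ls] [h1 h2 ->]] //.
move=> [h1 h2]; have [IH1 IH2] := IH z h1; split=> // f.
case/crep_split => [hf|[f' [a [hf ->]]]]; first exact: IH2.
have [_ H] := IH _ (h2 a); rewrite -catA; exact: H.
Qed.

Lemma cspan_crep (w : nat -> xword A) n f : in_cspan w 0 (Some n) f -> crep w n.+1 f.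
Proof.
move=> [ls [l1 l2 l3 l4]]; exists ls; split=> //.
- by rewrite -sorted_pairwise //; apply: ltn_trans.
Qed.

End Main.

Theorem lemma2p10 (A : finType) (hA : 0 < #|A|)
    (E : word A -> Prop) (s : nat -> xword A) :
  vseq s -> large E s ->
  exists w : nat -> xword A,
    [/\ vseq w, extracted w s &
        forall n : nat,
          large (fun z => E z /\ shiftset E (in_cspan w 0 (Some n)) z)
                (fun i => w (n.+1 + i))].
Proof.
move=> hs HE.
case/card_gt0P: hA => a0 _.
have Hstep : forall n c, (vseq c /\ extracted c s /\ large (Gs E c n) (fun i => c (n + i))) ->
  exists c', [/\ vseq c' /\ extracted c' s /\ large (Gs E c' n.+1) (fun i => c' (n.+1 + i)),
    vseq c', (forall i, i < n -> c' i = c i),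
    (forall k, k <= n -> extracted (fun i => c' (k + i)) (fun i => c (k + i))) &
    large (Gs E c' n.+1) (fun i => c' (n.+1 + i))].
  move=> n c [hc [hcs HG]].
  have hT : vseq (fun i => c (n + i)) by move=> i; apply: hc.
  have [u [hu huT Hu]] := Cprime a0 hT HG.
  pose c' := fun i => if i < n then c i else u (i - n).
  have hc' : vseq c' by move=> i; rewrite /c'; case: ltnP => _; [apply: hc|apply: hu].
  have hag : forall i, i < n -> c' i = c i by move=> i hi; rewrite /c' hi.
  have hTk : forall k, k <= n -> extracted (fun i => c' (k + i)) (fun i => c (k + i)).
    move=> k hk; apply: (glue (j := n - k) (K := n - k) (mm := id)) => //.
    - move=> i hi; rewrite /c' (_ : k + i < n); last by rewrite -ltn_subRL.
      exact: (vspan_single (fun j => c (k + j)) i).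
    - have -> : (fun i => c' (k + (n - k + i))) = u.
        apply: functional_extensionality => i; rewrite /c' addnA subnKC //.
        by rewrite ltnNge leq_addr /= addKn.
      have -> : (fun i => c (k + (n - k + i))) = (fun i => c (n + i)).
        by apply: functional_extensionality => i; rewrite addnA subnKC.
      exact: huT.
  have hL : large (Gs E c' n.+1) (fun i => c' (n.+1 + i)).
    have -> : (fun i => c' (n.+1 + i)) = (fun i => u (1 + i)).
      apply: functional_extensionality => i; rewrite /c'.
      case: (tail_aux n i) => -> _ _; congr u.
      by rewrite addSn subSn ?leq_addr // addKn.
    apply: large_mono Hu => z [h1 h2] /=; split.
      by apply/(Gs_agree _ hag).
    have e0 : c' n = u 0 by rewrite /c' ltnn subnn.
    by move=> a; apply/(Gs_agree _ hag); rewrite e0.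
  exists c'; split=> //; split=> //; split=> //.
  have := hTk 0 (leq0n _); rewrite T0 (T0 c) => h; exact: ext_trans h hcs.
have [cs [c0 cinv cQ cag cT]] := @iterate_seq A s
   (fun n c => vseq c /\ extracted c s /\ large (Gs E c n) (fun i => c (n + i)))
   (fun n c => large (Gs E c n.+1) (fun i => c (n.+1 + i)))
   (conj hs (conj (ext_refl s) (eq_ind _ (large E) HE _ (esym (T0 s))))) Hstep.
pose w := fun i => cs i.+1 i.
have hw : vseq w by move=> i; case: (cinv i.+1) => h _; apply: h.
exists w; split=> //.
- by have := cT 0; rewrite T0 c0.
- move=> n.
  have h1 := large_ext (cQ n) (cT n.+1).
  apply: large_mono h1 => z hz.
  have Hag : forall i, i < n.+1 -> cs n.+1 i = w i by move=> i hi; rewrite /w; apply: cag.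
  have hz' := proj1 (Gs_agree E Hag z) hz.
  have [hE hF] := Gs_sound hz'; split=> // f hf; apply: hF; exact: cspan_crep.
Qed.
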